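(* Let $G$ be a finite group and $p$ a prime. The weightings \[ k^H_{\mathcal S^*}=\sum_K\mu(H,K),\qquad k^H_{\mathcal T^*}=|G|^{-1}\sum_K\mu(H,K),\qquad k^H_{\mathcal O^*}=|G|^{-1}|H|\sum_K\mu(H,K) \] for $\mathcal S^*_G$, $\mathcal T^*_G$ and $\mathcal O^*_G$ respectively (sums over nonidentity $p$-subgroups $K$ of $G$) are supported on the nonidentity $p$-radical subgroups of $G$: they vanish at every nonidentity $p$-subgroup $H$ with $O_p(N_G(H)/H)\ne1$.
   Context: $N_G(H,K)=\{g\in G: g^{-1}Hg\le K\}$. Categories with objects the nonidentity $p$-subgroups of $G$ and composition induced by multiplication: $\mathcal S^*_G$ the poset under inclusion; $\mathcal T^*_G(H,K)=N_G(H,K)$; $\mathcal O^*_G(H,K)=N_G(H,K)/K$. A weighting of a finite category $\mathcal C$ is $k^\bullet:\mathrm{Ob}(\mathcal C)\to\mathbb Q$ with $\sum_b|\mathcal C(a,b)|k^b=1$ for every object $a$. $\mu(H,K)$ is the Möbius function of the poset of all subgroups of $G$ ($\mu(H,H)=1$, $\mu(H,K)=-\sum_{H\le L<K}\mu(H,L)$ for $H<K$, $0$ if $H\not\le K$). A $p$-subgroup $H$ is $p$-radical if $O_p(N_G(H)/H)=1$, where $O_p$ is the largest normal $p$-subgroup. *)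

(* Defs.v *)
From HB Require Import structures.
From mathcomp Require Import all_boot all_order all_algebra all_fingroup all_solvable.
Set Implicit Arguments. Unset Strict Implicit. Unset Printing Implicit Defensive.
Import GRing.Theory Num.Theory.
Local Open Scope group_scope.

Section Defs.
Variable gT : finGroupType.
Implicit Types (G H K L : {group gT}) (p : nat).

(* Objects of S*_G, T*_G, O*_G: the nonidentity p-subgroups of G. *)
Definition nid_psub G p (H : {group gT}) : bool :=
  [&& H \subset G, p.-group H & H != 1%G].

(* Implemented with fuel; fuel #|K| is sufficient since every L in the
   recursion satisfies #|L| < #|K|. *)
Fixpoint mobius_fuel (n : nat) G (H K : {group gT}) : rat :=
  match n with
  | 0 => 0
  | n'.+1 =>
      if (H :==: K) then 1
      else if (H \proper K) && (K \subset G) then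
        - \sum_(L : {group gT} | (H \subset L) && (L \proper K)) mobius_fuel n' G H L
      else 0
  end%R.

Definition mobius G (H K : {group gT}) : rat :=
  if (H \subset G) && (K \subset G) then mobius_fuel #|K| G H K else 0%R.

Definition transporter G (H K : {group gT}) : {set gT} :=
  [set g in G | H :^ g \subset K].

(* Sizes of hom-sets *)
Definition homS (H K : {group gT}) : nat := (H \subset K).
Definition homT G (H K : {group gT}) : nat := #|transporter G H K|.
Definition homO G (H K : {group gT}) : nat := #|lcosets K (transporter G H K)|.

Definition is_weighting (ob : pred {group gT}) (hom : {group gT} -> {group gT} -> nat)
  (k : {group gT} -> rat) : Prop :=
  forall a, ob a -> (\sum_(b : {group gT} | ob b) (hom a b)%:R * k b = 1)%R.

Definition kS G p (H : {group gT}) : rat :=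
  \sum_(K : {group gT} | nid_psub G p K) mobius G H K.
Definition kT G p (H : {group gT}) : rat := ((#|G|%:R)^-1 * kS G p H)%R.
Definition kO G p (H : {group gT}) : rat := ((#|G|%:R)^-1 * #|H|%:R * kS G p H)%R.

Definition p_radical G p (H : {group gT}) : bool := 'O_p('N_G(H) / H) == 1.
End Defs.

(* Main.v *)
Require Import Defs.
From mathcomp Require Import all_boot all_order all_algebra all_fingroup all_solvable.
From mathcomp Require Import zify.
Import GRing.Theory Num.Theory.
Set Implicit Arguments. Unset Strict Implicit.
Local Open Scope group_scope.

Section LC.
Variable gT : finGroupType.
Lemma lcosets_partition_mul (A : {set gT}) (B : {group gT}) :
  partition (lcosets B A) (A * B).
Proof.
set AB := (A * B); have sAAB: {subset A <= AB} by apply/subsetP/mulG_subl.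
have defHx x: x \in AB -> [set y in AB | lcoset B x == lcoset B y] = x *: B.
  move=> ABx; apply/setP=> y; rewrite inE !lcosetE (sameP eqP lcoset_eqP).
  by rewrite lcoset_sym; apply/andb_idl/subsetP; rewrite mulSG sub1set.
have:= preim_partitionP (lcoset B) AB; congr (partition _ _); apply/setP=> Bx.
apply/imsetP/idP=> [[x ABx ->] | ]; first by rewrite defHx // mem_lcosets.
by case/lcosetsP=> x /sAAB-ABx ->; exists x; rewrite ?defHx.
Qed.

Lemma card_lcosets_set (A : {set gT}) (B : {group gT}) :
  (A * B) \subset A -> (#|lcosets B A| * #|B|)%N = #|A|.
Proof.
move=> ABA; have eAB : (A * B) = A by apply/eqP; rewrite eqEsubset ABA mulG_subl.
rewrite -{2}eAB (@card_uniform_partition _ #|B| _ _ _ (lcosets_partition_mul A B)) //.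
by move=> _ /lcosetsP[x _ ->]; rewrite card_lcoset.
Qed.
End LC.

Section M.
Variable gT : finGroupType.
Variable G : {group gT}.
Implicit Types H K L : {group gT}.

Lemma fuel_eq n m H K : (#|K| <= n)%N -> (#|K| <= m)%N ->
  mobius_fuel n G H K = mobius_fuel m G H K.
Proof.
elim: n m K => [|n IH] m K.
  by rewrite leqNgt cardG_gt0.
case: m => [|m]; first by move=> _; rewrite leqNgt cardG_gt0.
move=> Kn Km.
rewrite [LHS]/mobius_fuel -/mobius_fuel [RHS]/mobius_fuel -/mobius_fuel.
case: ifP => // _; case: ifP => // _; congr (- _)%R.
apply: eq_bigr => L /andP[_ pLK].
have lt := proper_card pLK.
by apply: IH; rewrite -ltnS; apply: leq_trans lt _.
Qed.
Local Open Scope ring_scope.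

Lemma fuelS n H K : mobius_fuel n.+1 G H K =
  if (H :==: K) then 1
  else if (H \proper K) && (K \subset G) then
    - \sum_(L : {group gT} | (H \subset L) && (L \proper K)) mobius_fuel n G H L
  else 0.
Proof. by []. Qed.

Lemma mobiusE H K : mobius G H K =
  if (H \subset G) && (K \subset G) then
  (if (H :==: K) then 1
  else if (H \proper K) then
    - \sum_(L : {group gT} | (H \subset L) && (L \proper K)) mobius G H L
  else 0) else 0.
Proof.
rewrite /mobius; case: andP => // [[HG KG]].
rewrite (@fuel_eq #|K| (#|K|.-1.+1)); last 2 first.
- by [].
- by rewrite prednK ?cardG_gt0.
rewrite fuelS KG andbT.
case: ifP => // _; case: ifP => // _; congr (- _).
apply: eq_bigr => L /andP[HL LK].
have LG : L \subset G by apply: subset_trans (proper_sub LK) KG.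
rewrite HG LG /=; apply: fuel_eq => //.
by rewrite -ltnS prednK ?cardG_gt0 // proper_card.
Qed.

Lemma mob0 H K : ~~ (H \subset K) -> mobius G H K = 0.
Proof.
move=> nHK; rewrite mobiusE; case: andP => // _.
case: eqP => [e|_]; first by rewrite e subxx in nHK.
by rewrite properE (negbTE nHK).
Qed.

Lemma mob1 H : H \subset G -> mobius G H H = 1.
Proof. by move=> HG; rewrite mobiusE HG eqxx. Qed.

Lemma mobP H K : H \subset G -> K \subset G -> H \proper K ->
  mobius G H K = - \sum_(L : {group gT} | (H \subset L) && (L \proper K)) mobius G H L.
Proof.
move=> HG KG pHK; rewrite mobiusE HG KG pHK /=.
by case: eqP => // e; rewrite e properxx in pHK.
Qed.

Lemma left_id H K : H \subset G -> K \subset G ->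
  \sum_(L : {group gT} | (H \subset L) && (L \subset K)) mobius G H L = (H == K)%:R.
Proof.
move=> HG KG.
have [HK|nHK] := boolP (H \subset K); last first.
  rewrite big_pred0; last first.
    by move=> L; apply/andP=> [[HL LK]]; case/negP: nHK; apply: subset_trans LK.
  by case: eqP => // e; rewrite e subxx in nHK.
case: (eqVneq H K) => [<-|neHK].
  rewrite (big_pred1 H) ?mob1 // => L; rewrite -eqEsubset.
  by apply/eqP/eqP=> [/val_inj|->].
have pHK : H \proper K by rewrite properEneq HK andbT; apply: contra neHK => /eqP/val_inj->.
rewrite (bigD1 K) /=; last by rewrite HK subxx.
rewrite mobP // addrC.
rewrite (eq_bigl (fun L : {group gT} => (H \subset L) && (L \proper K))); first by rewrite subrr.
move=> L; rewrite properEneq -andbA; congr (_ && _).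
by rewrite andbC; congr (_ && _); apply/idP/idP=> [/eqP/val_inj ->|] //; apply: contra => /eqP->.
Qed.

Lemma mob_sub H K : mobius G H K != 0 -> H \subset K.
Proof. by apply: contraR => /mob0->. Qed.

Lemma right_id H K : H \subset G -> K \subset G ->
  \sum_(L : {group gT} | (H \subset L) && (L \subset K)) mobius G L K = (H == K)%:R.
Proof.
move=> HG KG.
have [n] := ubnP (#|G| - #|H|)%N; elim: n H HG => // n IH H HG lt.
have [HK|nHK] := boolP (H \subset K); last first.
  rewrite big_pred0; last first.
    by move=> L; apply/andP=> [[HL LK]]; case/negP: nHK; apply: subset_trans LK.
  by case: eqP => // e; rewrite e subxx in nHK.
case: (eqVneq H K) => [<-|neHK].
  rewrite (big_pred1 H) ?mob1 // => L; rewrite -eqEsubset.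
  by apply/eqP/eqP=> [/val_inj|->].
set rho := fun X : {group gT} =>
  \sum_(L : {group gT} | (X \subset L) && (L \subset K)) mobius G L K.
have D : \sum_(L : {group gT} | (H \subset L) && (L \subset K)) mobius G H L * rho L
         = mobius G H K.
  rewrite /rho.
  under eq_bigr => L _ do rewrite big_distrr /=.
  rewrite (exchange_big_dep (fun J : {group gT} => (H \subset J) && (J \subset K))) /=; last first.
    by move=> L J /andP[HL _] /andP[LJ JK]; rewrite (subset_trans HL LJ).
  rewrite (bigD1 H) /=; last by rewrite subxx.
  rewrite [X in _ + X = _]big1 ?addr0; last first.
    move=> J /andP[/andP[HJ JK] neJH].
    rewrite -big_distrl /=.
    rewrite (eq_bigl (fun L : {group gT} => (H \subset L) && (L \subset J))).
      by rewrite left_id ?(subset_trans JK) // eq_sym (negbTE neJH) mul0r.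
    move=> L; apply/andP/andP=> [[/andP[HL _] /andP[LJ _]]|[HL LJ]]; first by [].
    by rewrite HL (subset_trans LJ JK) LJ.
  rewrite (big_pred1 H); first by rewrite mob1 // mul1r.
  move=> L /=; apply/idP/eqP => [/and3P[/andP[HL _] LH _]|->].
    by apply: val_inj; apply/eqP; rewrite eqEsubset LH HL.
  by rewrite subxx HK.
have D2 : \sum_(L : {group gT} | (H \subset L) && (L \subset K)) mobius G H L * rho L
         = rho H + mobius G H K.
  rewrite (bigD1 H) /=; last by rewrite subxx HK.
  rewrite mob1 // mul1r; congr (_ + _).
  rewrite (bigD1 K) /=; last by rewrite HK subxx eq_sym.
  rewrite big1 ?addr0.
    rewrite /rho IH ?eqxx ?mulr1 //.
    have h1 : (#|H| < #|K|)%N by rewrite proper_card // properEneq HK andbT.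
    have h2 := subset_leq_card KG; lia.
  move=> L /andP[/andP[/andP[HL LK] neLH] neLK].
  rewrite /rho IH ?(negbTE neLK) ?mulr0 ?(subset_trans LK) //.
  have pHL : H \proper L by rewrite properEneq HL andbT eq_sym.
  have h1 := proper_card pHL; have h2 := subset_leq_card (subset_trans LK KG); lia.
have R0 : rho H = 0 by apply: (addIr (mobius G H K)); rewrite add0r -D2 D.
by rewrite -[LHS]/(rho H) R0.
Qed.

Lemma ne1S H K : H \subset K -> H != 1%G -> K != 1%G.
Proof.
move=> HK; apply: contra => /eqP KE; rewrite KE in HK.
by apply/eqP; apply/trivGP.
Qed.

Variable p : nat.

Lemma mobN H K : H \subset G -> K \subset G -> p.-group K -> ~~ (K \subset 'N(H)) ->
  mobius G H K = 0.
Proof.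
have [n] := ubnP #|K|; elim: n K => // n IH K lt HG KG pK nKN.
have [HK|nHK] := boolP (H \subset K); last by rewrite mob0.
have pHK : H \proper K.
  rewrite properEneq HK andbT; apply: contra nKN => /eqP/val_inj <-; exact: normG.
have pHN := nilpotent_proper_norm (pgroup_nil pK) pHK.
have NK : 'N_K(H) \proper K.
  by rewrite properEneq subsetIl andbT; apply: contra nKN => /eqP <-; apply: subsetIr.
rewrite mobP //.
rewrite (eq_bigr (fun L : {group gT} => if L \subset 'N_K(H) then mobius G H L else 0)); last first.
  move=> L /andP[HL pLK]; case: ifP => // LN.
  apply: IH; rewrite ?(subset_trans (proper_sub pLK) KG) ?(pgroupS (proper_sub pLK) pK) //.
    by apply: leq_trans (proper_card pLK) _; rewrite -ltnS.
  by apply: contraFN LN => LN; rewrite subsetI (proper_sub pLK).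
rewrite -big_mkcondr /=.
rewrite (eq_bigl (fun L : {group gT} => (H \subset L) && (L \subset 'N_K(H)%G))); last first.
  move=> L /=; rewrite -andbA; congr (_ && _).
  by apply/andP/idP => [[]//|LN]; rewrite LN (sub_proper_trans LN NK).
rewrite left_id ?(subset_trans (subsetIl _ _) KG) //.
have : H != 'N_K(H)%G.
  move: pHN; rewrite properEneq => /andP[ne _].
  by apply: contraNneq ne => E; rewrite {1}E.
by move/negbTE->; rewrite oppr0.
Qed.

Lemma kS_vanish H : nid_psub G p H -> ~~ p_radical G p H -> kS G p H = 0.
Proof.
case/and3P=> HG pH H1 nrad.
set N := 'N_G(H)%G.
have nHN : H <| N := normalSG HG.
set Q := (coset H @*^-1 'O_p(N / H))%G.
have HQ : H \subset Q by apply: sub_cosetpre.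
have QN : Q \subset N.
  rewrite -(quotientGK nHN); apply: morphpreS; exact: pcore_sub.
have nQN : N \subset 'N(Q).
  apply: normal_norm; rewrite /Q /= -[X in _ <| X](quotientGK nHN) cosetpre_normal.
  exact: pcore_normal.
have NNH : N \subset 'N(H) by apply: subsetIr.
have NG : N \subset G by apply: subsetIl.
have pQ : p.-group Q.
  rewrite -(pquotient_pgroup pH (subset_trans QN NNH)) cosetpreK.
  exact: pcore_pgroup.
have neQH : (Q : {set gT}) != H.
  apply: contra nrad => /eqP QH; apply/eqP.
  by rewrite /p_radical -/N -(cosetpreK ('O_p(N / H))) -/Q QH trivg_quotient.
pose Y (K : {group gT}) := [&& H \subset K, K \subset N & p.-group K].
pose c (K : {group gT}) := (K <*> Q)%G.
have YC K : Y K -> Y (c K).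
  case/and3P=> HK KN pK; rewrite /Y /c /= join_subG KN QN.
  rewrite (subset_trans HK (joing_subl _ _)) norm_joinEl ?pgroupM ?pK ?pQ //.
  exact: subset_trans KN nQN.
have QC K : Q \subset c K by apply: joing_subr.
have cZ K (Z : {group gT}) : Q \subset Z -> (c K \subset Z) = (K \subset Z).
  by move=> QZ; rewrite /c /= join_subG QZ andbT.
have T0 : forall Z : {group gT}, Y Z -> Q \subset Z ->
    \sum_(K : {group gT} | Y K && (c K == Z)) mobius G H K = 0.
  move=> Z; have [n] := ubnP #|Z|; elim: n Z => // n IH Z lt YZ QZ.
  case/and3P: (YZ) => HZ ZN pZ.
  have E : \sum_(K : {group gT} | (H \subset K) && (K \subset Z)) mobius G H K = 0.
    rewrite left_id ?(subset_trans ZN NG) //.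
    case: eqP => // HZe; case/negP: neQH; rewrite eqEsubset HQ andbT.
    by rewrite HZe.
  rewrite (eq_bigl (fun K : {group gT} => Y K && (c K \subset Z))) in E; last first.
    move=> K; rewrite cZ // /Y.
    apply/idP/idP => [/andP[HK KZ]|/andP[/and3P[-> _ _] ->] //].
    by rewrite HK KZ (subset_trans KZ ZN) (pgroupS KZ pZ).
  rewrite (partition_big c (fun W : {group gT} => Y W && (Q \subset W) && (W \subset Z))) in E;
    last by move=> K /andP[YK cKZ]; rewrite YC // QC.
  rewrite (bigD1 Z) /= in E; last by rewrite YZ QZ subxx.
  rewrite [X in _ + X = _]big1 ?addr0 in E; last first.
    move=> W /andP[/andP[/andP[YW QW] WZ] neWZ].
    rewrite -[RHS](IH W) //; last first.
      have pWZ : W \proper Z.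
        by rewrite properEneq WZ andbT; apply: contra neWZ => /eqP/val_inj->.
      by apply: leq_trans (proper_card pWZ) _; rewrite -ltnS.
    apply: eq_bigl => K; case: (c K =P W) => [e|_]; last by rewrite !andbF.
    by move: (WZ); rewrite -e /c /= => h; rewrite !andbT; apply/andb_idr => _; exact: h.
  rewrite -[RHS]E; apply: eq_bigl => K; case: (c K =P Z) => [e|_]; last by rewrite !andbF.
  by move: (subxx Z); rewrite -{1}e /c /= => h; rewrite !andbT; apply/esym/andb_idr => _; exact: h.
rewrite /kS.
have E : \sum_(K : {group gT} | nid_psub G p K) mobius G H K
       = \sum_(K : {group gT} | Y K) mobius G H K.
  rewrite big_mkcond [RHS]big_mkcond; apply: eq_bigr => K _.
  case nK: (nid_psub G p K); case YK: (Y K) => //.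
    move/and3P: nK => [KG pK K1].
    have [HK|nHK] := boolP (H \subset K); last by rewrite mob0.
    apply: mobN => //; apply: contraFN YK => KN.
    by rewrite /Y HK pK /N /= subsetI KG KN.
  case/and3P: (YK) => HK KN pK; move/negbT: nK.
  by rewrite /nid_psub (subset_trans KN NG) pK (ne1S HK H1).
rewrite E (partition_big c (fun W : {group gT} => Y W && (Q \subset W))); last first.
  by move=> K YK; rewrite YC // QC.
by rewrite big1 // => W /andP[YW QW]; exact: T0.
Qed.

Lemma wS a : nid_psub G p a ->
  \sum_(b : {group gT} | nid_psub G p b) (homS a b)%:R * kS G p b = 1.
Proof.
case/and3P=> aG pa a1.
rewrite /kS; under eq_bigr => b _ do rewrite big_distrr /=.
rewrite exchange_big /=.
rewrite (eq_bigr (fun K : {group gT} => (a == K)%:R)); last first.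
  move=> K /and3P[KG pK K1].
  rewrite -right_id //; rewrite big_mkcond [RHS]big_mkcond; apply: eq_bigr => b _.
  rewrite /homS.
  have [ab|nab] := boolP (a \subset b); last first.
    by rewrite mul0r andFb; case: ifP.
  rewrite mul1r andTb.
  have [bK|nbK] := boolP (b \subset K); last by rewrite mob0 //; case: ifP.
  by rewrite /nid_psub (subset_trans bK KG) (pgroupS bK pK) (ne1S ab a1).
rewrite (bigD1 a) /=; last by rewrite /nid_psub aG pa a1.
rewrite eqxx big1 ?addr0 // => K /andP[_ ne].
by rewrite eq_sym (negbTE ne).
Qed.


Lemma nidJ a g : nid_psub G p a -> g \in G -> nid_psub G p (a :^ g)%G.
Proof.
case/and3P=> aG pa a1 gG.
have agG : a :^ g \subset G by rewrite -(conjGid gG) conjSg.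
rewrite /nid_psub /= agG pgroupJ pa /=.
by rewrite -val_eqE /= conjsg_eq1; rewrite -val_eqE /= in a1.
Qed.

Lemma cardT a b : (#|transporter G a b|)%:R = \sum_(g in G) ((homS (a :^ g)%G b)%:R : rat).
Proof.
rewrite -sum1_card natr_sum big_mkcond [RHS]big_mkcond; apply: eq_bigr => g _.
rewrite /transporter inE /homS /=; case: (g \in G) => //=.
by case: (_ \subset _).
Qed.

Lemma GR : (#|G|%:R : rat) != 0.
Proof. by rewrite pnatr_eq0 -lt0n cardG_gt0. Qed.

Lemma wT a : nid_psub G p a ->
  \sum_(b : {group gT} | nid_psub G p b) (homT G a b)%:R * kT G p b = 1.
Proof.
move=> na.
under eq_bigr => b _ do rewrite /homT cardT big_distrl /=.
rewrite exchange_big /=.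
rewrite (eq_bigr (fun _ => (#|G|%:R : rat)^-1)); last first.
  move=> g gG; rewrite -[RHS]mulr1 -[X in _ = _ * X](wS (nidJ na gG)) big_distrr /=.
  by apply: eq_bigr => b _; rewrite /kT mulrCA.
rewrite sumr_const.
have -> : forall x : rat, x *+ #|G| = x * #|G|%:R by move=> x; rewrite mulr_natr.
by rewrite mulVf ?GR.
Qed.

Lemma wO a : nid_psub G p a ->
  \sum_(b : {group gT} | nid_psub G p b) (homO G a b)%:R * kO G p b = 1.
Proof.
move=> na; rewrite -[RHS](wT na); apply: eq_bigr => b /and3P[bG _ _].
rewrite /homO /homT /kO /kT.
rewrite -(card_lcosets_set (A := transporter G a b) (B := b)).
  by rewrite natrM -!mulrA; congr (_ * _); rewrite mulrCA.
apply/subsetP=> z /mulsgP[x y]; rewrite /transporter !inE => /andP[xG axb] yb ->.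
rewrite groupM ?xG ?(subsetP bG y yb) //= conjsgM -(conjGid yb) conjSg.
exact: axb.
Qed.
End M.

Close Scope group_scope.
Unset Implicit Arguments.

Theorem corollary3p10 (gT : finGroupType) (G : {group gT}) (p : nat) :
  prime p ->
  [/\ is_weighting (nid_psub G p) (@homS gT) (kS G p),
      is_weighting (nid_psub G p) (homT G) (kT G p),
      is_weighting (nid_psub G p) (homO G) (kO G p)
    & forall H : {group gT}, nid_psub G p H -> ~~ p_radical G p H ->
        [/\ kS G p H = 0%R, kT G p H = 0%R & kO G p H = 0%R]].
Proof.
move=> _; split.
- by move=> a na; apply: wS.
- by move=> a na; apply: wT.
- by move=> a na; apply: wO.
move=> H nH nr; have k0 := kS_vanish nH nr.
by rewrite /kT /kO k0 !GRing.mulr0.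
Qed.
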